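(* Fix $n\in\mathbb{N}$ and $s\in(0,1)$. Suppose that for every $i>2$ the jump kernels satisfy $\lambda_i|x-y|^{-1-2s}\le j_i^{(n)}(x,y)\le\Lambda_i|x-y|^{-1-2s}$ for all $n\ge0$ and all wires $\{x,y\}\in W_i^{(n)}$, with $0<\lambda_i\le\Lambda_i<\infty$, $\lim_{i\to\infty}\lambda_i/i^2=1$ and $\lim_{i\to\infty}\Lambda_i/i^2=1$. If $u$ is a continuous real function on $\overline{V}_{i_0}^*$ for some $i_0>2$, then $$\lim_{i\to\infty}\mathcal{E}_i^{(n)}(u|_{V_i^{(n)}})=2|u(0)-u(1)|^2.$$
   Context: Index graph: vertices $\mathbb{N}$; vertex $i$ has edges $e_{i,2i-2}$ to $2i-2$ (only if $i\ge2$), $e_{i,2i-1},e'_{i,2i-1}$ to $2i-1$, $e_{i,2i}$ to $2i$, weights $r_e>0$ with $r_{e_{i,2i-1}}=r_{e'_{i,2i-1}}$. For $e$ from $i$ to $j$, $\phi_e(x)=\frac{j}{2i}x+s_e$, $s_e=0$ for $e\in\{e_{i,2i-1},e_{i,2i}\}$, $s_e=\frac1{2i}$ for $e\in\{e_{i,2i-2},e'_{i,2i-1}\}$. $E_i^{(n)}$: paths $\sigma=e_1\cdots e_n$ of length $n$ from $i$; $\phi_\sigma=\phi_{e_1}\circ\cdots\circ\phi_{e_n}$, $\delta_\sigma=r_{e_1}\cdots r_{e_n}$. For $i>1$: $V_{i-}^{(n)}=\{k/(i2^n)\}_{k=0}^{2^n-1}$, $V_{i+}^{(n)}=\{1-k/(i2^n)\}_{k=0}^{2^n-1}$,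 $V_i^{(n)}=V_{i-}^{(n)}\cup V_{i+}^{(n)}$, $\overline{V}_i^*=[0,\frac1i]\cup[1-\frac1i,1]$ (so $V_i^{(n)}\subset\overline{V}_{i_0}^*$ for $i\ge i_0$). Wires $W_i^{(n)}=\{\{\phi_\sigma(0),\phi_\sigma(1)\}:\sigma\in E_i^{(n)}\}$ are all pairs $\{x,y\}$ with $x\in V_{i-}^{(n)},y\in V_{i+}^{(n)}$, each with a unique path $\sigma^{(n)}_{x,y}$. $\mu_i^{(n)}(x)=\frac1{i2^n}$. Kernel $j_i^{(n)}(x,y)=(\delta_{\sigma^{(n)}_{x,y}}\mu_i^{(n)}(x)\mu_i^{(n)}(y))^{-1}$ on wires, $0$ otherwise. $\mathcal{E}_i^{(n)}(v)=\sum_{x,y\in V_i^{(n)}}(v(x)-v(y))^2j_i^{(n)}(x,y)\mu_i^{(n)}(x)\mu_i^{(n)}(y)$ for $v:V_i^{(n)}\to\mathbb{R}$. *)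

(* Defs.v *)
From HB Require Import structures.
From mathcomp Require Import all_boot all_order all_algebra.
From mathcomp Require Import all_classical all_reals all_analysis.
Set Implicit Arguments. Unset Strict Implicit. Unset Printing Implicit Defensive.
Import Order.TTheory GRing.Theory Num.Theory.
Import numFieldNormedType.Exports.
Local Open Scope classical_set_scope.
Local Open Scope ring_scope.

(* Edges out of vertex i of the index graph are encoded by k : 'I_4:
   k = 0 : e_{i,2i-2}  (only meaningful for i >= 2)
   k = 1 : e_{i,2i-1}
   k = 2 : e'_{i,2i-1}
   k = 3 : e_{i,2i}                                                       *)
Definition e_2im2 : 'I_4 := @Ordinal 4 0 isT.
Definition e_2im1 : 'I_4 := @Ordinal 4 1 isT.
Definition e'_2im1 : 'I_4 := @Ordinal 4 2 isT.
Definition e_2i : 'I_4 := @Ordinal 4 3 isT.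

Definition tgt (i : nat) (k : 'I_4) : nat :=
  if (k : nat) == 0%N then (2 * i - 2)%N
  else if (k : nat) == 3%N then (2 * i)%N
  else (2 * i - 1)%N.

Section Graph.
Variable R : realType.

Definition shift (i : nat) (k : 'I_4) : R :=
  if ((k : nat) == 0%N) || ((k : nat) == 2%N) then ((2 * i)%N%:R)^-1 else 0.

Definition phi_edge (i : nat) (k : 'I_4) (x : R) : R :=
  (tgt i k)%:R / (2 * i)%N%:R * x + shift i k.

Fixpoint phi_path (i : nat) (s : seq 'I_4) (x : R) : R :=
  match s with
  | [::] => x
  | k :: s' => phi_edge i k (phi_path (tgt i k) s' x)
  end.

(* delta_sigma = r_{e_1} ... r_{e_n}; r i k is the weight of edge k out of i *)
Fixpoint delta_path (r : nat -> 'I_4 -> R) (i : nat) (s : seq 'I_4) : R :=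
  match s with
  | [::] => 1
  | k :: s' => r i k * delta_path r (tgt i k) s'
  end.

Definition V_minus (i n : nat) : seq R :=
  [seq (k%:R / (i * 2 ^ n)%N%:R) | k <- iota 0 (2 ^ n)].
Definition V_plus (i n : nat) : seq R :=
  [seq (1 - k%:R / (i * 2 ^ n)%N%:R) | k <- iota 0 (2 ^ n)].
Definition V_set (i n : nat) : seq R := V_minus i n ++ V_plus i n.

Definition Vbar_star (i : nat) : set R :=
  [set x | 0 <= x <= (i%:R)^-1] `|` [set x | 1 - (i%:R)^-1 <= x <= 1].

Definition mu (i n : nat) : R := ((i * 2 ^ n)%N%:R)^-1.

Definition is_wire_path (i : nat) (n : nat) (s : n.-tuple 'I_4) (x y : R) : bool :=
  ((phi_path i s 0 == x) && (phi_path i s 1 == y)) ||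
  ((phi_path i s 0 == y) && (phi_path i s 1 == x)).

Definition jker (r : nat -> 'I_4 -> R) (i n : nat) (x y : R) : R :=
  match [pick s : n.-tuple 'I_4 | is_wire_path i s x y] with
  | Some s => (delta_path r i s * mu i n * mu i n)^-1
  | None => 0
  end.

Definition energy (r : nat -> 'I_4 -> R) (i n : nat) (v : R -> R) : R :=
  \sum_(x <- V_set i n) \sum_(y <- V_set i n)
     (v x - v y) ^+ 2 * jker r i n x y * mu i n * mu i n.

End Graph.

(* Main.v *)
Require Import Defs.
From HB Require Import structures.
From mathcomp Require Import all_boot all_order all_algebra.
From mathcomp Require Import all_classical all_reals all_analysis.
From mathcomp Require Import ring lra zify.
Import Order.TTheory GRing.Theory Num.Theory.
Import numFieldNormedType.Exports.
Local Open Scope classical_set_scope.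
Local Open Scope ring_scope.

Fixpoint Aof (s : seq 'I_4) : nat :=
  if s is k :: s' then (Aof s' + 2 ^ size s' * (((k : nat) == 0%N) || ((k : nat) == 2%N)))%N else 0%N.
Fixpoint Bof (s : seq 'I_4) : nat :=
  if s is k :: s' then (Bof s' + 2 ^ size s' * (((k : nat) == 0%N) || ((k : nat) == 1%N)))%N else 0%N.

Lemma tgt_ge2 i k : (2 <= i)%N -> (2 <= tgt i k)%N.
Proof. rewrite /tgt; case: eqP => _; [|case: eqP => _]; lia. Qed.

Lemma Aof_lt s : (Aof s < 2 ^ size s)%N.
Proof. elim: s => [|k s IH] //=; rewrite expnS; case: (_ || _); lia. Qed.
Lemma Bof_lt s : (Bof s < 2 ^ size s)%N.
Proof. elim: s => [|k s IH] //=; rewrite expnS; case: (_ || _); lia. Qed.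

Lemma phi0 (R : realType) s i : (2 <= i)%N ->
  phi_path i s (0:R) = (Aof s)%:R / (i * 2 ^ size s)%N%:R.
Proof.
elim: s i => [|k s IH] i hi /=; first by rewrite mul0r.
rewrite IH ?tgt_ge2 //.
have hi' : (2:R) <= i%:R by rewrite ler_nat.
have h2 : (0:R) < (2 ^ size s)%:R by rewrite ltr0n expn_gt0.
have e2 : ((2*i-2)%N%:R : R) = 2*i%:R - 2 by rewrite natrB ?natrM //; lia.
have e1 : ((2*i-1)%N%:R : R) = 2*i%:R - 1 by rewrite natrB ?natrM //; lia.
rewrite /phi_edge /tgt /Defs.shift.
case: k => [[|[|[|[|m]]]] hk] //=; rewrite ?mulr1 ?mulr0 ?addr0 ?addn0 ?muln1 ?muln0 expnS !natrM ?e1 ?e2 ?natrD !natrX.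
all: set X := (2:R) ^+ size s; set I := (i%:R : R).
all: have hX : X != 0 by rewrite expf_neq0.
all: have hI : I != 0 by apply/eqP => h; lra.
all: have hI2 : 2 * I - 2 != 0 by apply/eqP => h; lra.
all: have hI1 : 2 * I - 1 != 0 by apply/eqP => h; lra.
all: field.
all: by rewrite ?hX ?hI ?hI1 ?hI2.
Qed.

Lemma phi1 (R : realType) s i : (2 <= i)%N ->
  phi_path i s (1:R) = 1 - (Bof s)%:R / (i * 2 ^ size s)%N%:R.
Proof.
elim: s i => [|k s IH] i hi /=; first by rewrite mul0r subr0.
rewrite IH ?tgt_ge2 //.
have hi' : (2:R) <= i%:R by rewrite ler_nat.
have h2 : (0:R) < (2 ^ size s)%:R by rewrite ltr0n expn_gt0.
have e2 : ((2*i-2)%N%:R : R) = 2*i%:R - 2 by rewrite natrB ?natrM //; lia.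
have e1 : ((2*i-1)%N%:R : R) = 2*i%:R - 1 by rewrite natrB ?natrM //; lia.
rewrite /phi_edge /tgt /Defs.shift.
case: k => [[|[|[|[|m]]]] hk] //=; rewrite ?mulr1 ?mulr0 ?addr0 ?addn0 ?muln1 ?muln0 expnS !natrM ?e1 ?e2 ?natrD !natrX.
all: set X := (2:R) ^+ size s; set I := (i%:R : R).
all: have hX : X != 0 by rewrite expf_neq0.
all: have hI : I != 0 by apply/eqP => h; lra.
all: have hI2 : 2 * I - 2 != 0 by apply/eqP => h; lra.
all: have hI1 : 2 * I - 1 != 0 by apply/eqP => h; lra.
all: field.
all: by rewrite ?hX ?hI ?hI1 ?hI2.
Qed.

Lemma exists_path n a b : (a < 2 ^ n)%N -> (b < 2 ^ n)%N ->
  exists sg : n.-tuple 'I_4, Aof sg = a /\ Bof sg = b.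
Proof.
elim: n a b => [|n IH] a b ha hb.
  exists [tuple]; rewrite /=; split; lia.
rewrite expnS in ha hb.
have [sg [h1 h2]] := IH (if (2 ^ n <= a)%N then a - 2 ^ n else a)%N
                        (if (2 ^ n <= b)%N then b - 2 ^ n else b)%N
                        ltac:(case: ifP; lia) ltac:(case: ifP; lia).
case ea: (2 ^ n <= a)%N; case eb: (2 ^ n <= b)%N; rewrite ea eb in h1 h2.
- exists (cons_tuple e_2im2 sg); rewrite /= size_tuple h1 h2; split; lia.
- exists (cons_tuple e'_2im1 sg); rewrite /= size_tuple h1 h2; split; lia.
- exists (cons_tuple e_2im1 sg); rewrite /= size_tuple h1 h2; split; lia.
- exists (cons_tuple e_2i sg); rewrite /= size_tuple h1 h2; split; lia.
Qed.

Lemma jker_sym (R : realType) r i n (x y : R) : jker r i n x y = jker r i n y x.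
Proof.
rewrite /jker.
have -> : [pick s : n.-tuple 'I_4 | is_wire_path i s x y] = [pick s : n.-tuple 'I_4 | is_wire_path i s y x].
  by apply: eq_pick => sg; rewrite /is_wire_path orbC.
by [].
Qed.

Lemma neq_pt (R : realType) i n a b : (2 < i)%N -> (a < 2 ^ n)%N -> (b < 2 ^ n)%N ->
  1 - b%:R / (i * 2 ^ n)%N%:R != a%:R / (i * 2 ^ n)%N%:R :> R.
Proof.
move=> hi ha hb; apply/eqP => h.
have hN : (i * 2 ^ n)%N%:R != 0 :> R by rewrite pnatr_eq0 muln_eq0 expn_eq0 /=; lia.
have e : (i * 2 ^ n)%N%:R = a%:R + b%:R :> R.
  have e1 : (a%:R : R) = (i * 2 ^ n)%N%:R - b%:R.
    by rewrite -[a%:R](divfK hN) -h mulrBl mul1r divfK.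
  by rewrite e1 subrK.
move: e; rewrite -natrD => /eqP; rewrite eqr_nat => /eqP.
set p := (2 ^ n)%N in ha hb *; nia.
Qed.

Lemma jker0 (R : realType) r i n (x y : R) :
  (2 < i)%N ->
  (forall (sg : n.-tuple 'I_4), phi_path i sg 1 != x /\ phi_path i sg 1 != y) ->
  jker r i n x y = 0.
Proof.
move=> hi H; rewrite /jker; case: pickP => [sg|] //.
rewrite /is_wire_path; have [h1 h2] := H sg.
by rewrite (negbTE h1) (negbTE h2) !andbF.
Qed.

Lemma jker0' (R : realType) r i n (x y : R) :
  (forall (sg : n.-tuple 'I_4), ~~ is_wire_path i sg x y) ->
  jker r i n x y = 0.
Proof.
move=> H; rewrite /jker; case: pickP => [sg h|] //.
by have := H sg; rewrite h.
Qed.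

Lemma inv_nat_cvg0 (R : realType) : (fun i : nat => (i%:R : R)^-1) @ \oo --> 0.
Proof.
rewrite -cvg_shiftS /=; exact: cvg_harmonic.
Qed.

Lemma frac_cvg0 (R : realType) (n k : nat) :
  (fun i : nat => (k%:R / (i * 2 ^ n)%N%:R : R)) @ \oo --> 0.
Proof.
have -> : (fun i : nat => (k%:R / (i * 2 ^ n)%N%:R : R)) =
          (fun i => (k%:R * (2 ^ n)%N%:R^-1) * (i%:R)^-1).
  by apply: funext => i; rewrite natrM invfM; ring.
rewrite -(mulr0 (k%:R * (2 ^ n)%N%:R^-1 : R)).
apply: cvgM; [exact: cvg_cst | exact: inv_nat_cvg0].
Qed.

Lemma cvg_within_seq (R : realType) (A : set R) (f : nat -> R) (x : R) :
  f @ \oo --> x -> (\forall i \near \oo, A (f i)) -> f @ \oo --> within A (nbhs (x : R)).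
Proof.
move=> fx hA P; rewrite /within /= => hP.
have h := fx _ hP.
by apply: filterS2 hA h => i Ai /(_ Ai).
Qed.

Lemma cvg_sum_seq (R : realType) (T : eqType) (s : seq T) (f : T -> nat -> R) (l : T -> R) :
  (forall t, t \in s -> f t @ \oo --> l t) ->
  (fun i => \sum_(t <- s) f t i) @ \oo --> \sum_(t <- s) l t.
Proof.
elim: s => [|t s IH] H.
  have -> : (fun i => \sum_(t <- [::]) f t i) = fun=> 0.
    by apply: funext => i; rewrite big_nil.
  rewrite big_nil; exact: cvg_cst.
have -> : (fun i => \sum_(t0 <- t :: s) f t0 i) = (fun i => f t i + \sum_(t0 <- s) f t0 i).
  by apply: funext => i; rewrite big_cons.
rewrite big_cons; apply: cvgD.
  by apply: H; rewrite inE eqxx.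
by apply: IH => t' ht'; apply: H; rewrite inE ht' orbT.
Qed.

Lemma le_frac (R : realType) i0 i n k : (0 < i0)%N -> (i0 <= i)%N -> (k <= 2 ^ n)%N ->
  k%:R / (i * 2 ^ n)%N%:R <= (i0%:R : R)^-1.
Proof.
move=> h0 h1 hk.
have hN : (0:R) < (i * 2 ^ n)%N%:R by rewrite ltr0n muln_gt0 expn_gt0 /=; lia.
rewrite ler_pdivrMr // mulrC ler_pdivlMr ?ltr0n // -natrM ler_nat.
set p := (2 ^ n)%N in hk *; nia.
Qed.

Lemma frac_ge0 (R : realType) i n k : (0:R) <= k%:R / (i * 2 ^ n)%N%:R.
Proof. by rewrite divr_ge0 ?ler0n. Qed.


Lemma stepA (R : realType) (n : nat) (r : nat -> 'I_4 -> R) (u : R -> R) (i : nat) :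
  (2 < i)%N ->
  energy r i n u = 2 * \sum_(a <- iota 0 (2 ^ n)) \sum_(b <- iota 0 (2 ^ n))
     ((u (a%:R / (i * 2 ^ n)%N%:R) - u (1 - b%:R / (i * 2 ^ n)%N%:R)) ^+ 2 *
      jker r i n (a%:R / (i * 2 ^ n)%N%:R) (1 - b%:R / (i * 2 ^ n)%N%:R) * mu R i n * mu R i n).
Proof.
move=> hi.
have hi2 : (2 <= i)%N by lia.
have bA (sg : n.-tuple 'I_4) : (Aof sg < 2 ^ n)%N by have := Aof_lt sg; rewrite size_tuple.
have bB (sg : n.-tuple 'I_4) : (Bof sg < 2 ^ n)%N by have := Bof_lt sg; rewrite size_tuple.
rewrite /energy /V_set.
under eq_bigr => x _ do rewrite big_cat.
rewrite big_cat /= !big_split /=.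
have Z1 : \sum_(x <- V_minus R i n) \sum_(y <- V_minus R i n)
   (u x - u y) ^+ 2 * jker r i n x y * mu R i n * mu R i n = 0.
  rewrite big1_seq // => x /andP[_ hx]; rewrite big1_seq // => y /andP[_ hy].
  move: hx hy; rewrite /V_minus => /mapP[a + ->] /mapP[a' + ->].
  rewrite !mem_iota !add0n => /andP[_ ha] /andP[_ ha'].
  rewrite jker0' ?mulr0 ?mul0r // => sg.
  rewrite /is_wire_path (phi1 _ _ _ hi2) size_tuple.
  by rewrite (negbTE (neq_pt R i n _ _ hi ha (bB sg))) (negbTE (neq_pt R i n _ _ hi ha' (bB sg))) !andbF.
have Z2 : \sum_(x <- V_plus R i n) \sum_(y <- V_plus R i n)
   (u x - u y) ^+ 2 * jker r i n x y * mu R i n * mu R i n = 0.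
  rewrite big1_seq // => x /andP[_ hx]; rewrite big1_seq // => y /andP[_ hy].
  move: hx hy; rewrite /V_plus => /mapP[a + ->] /mapP[a' + ->].
  rewrite !mem_iota !add0n => /andP[_ ha] /andP[_ ha'].
  rewrite jker0' ?mulr0 ?mul0r // => sg.
  rewrite /is_wire_path (phi0 _ _ _ hi2) size_tuple.
  have nA c : (c < 2 ^ n)%N -> ((Aof sg)%:R / (i * 2 ^ n)%N%:R == 1 - c%:R / (i * 2 ^ n)%N%:R :> R) = false.
    by move=> hc; rewrite eq_sym (negbTE (neq_pt R i n _ _ hi (bA sg) hc)).
  by rewrite !nA.
have Sy : \sum_(x <- V_plus R i n) \sum_(y <- V_minus R i n)
   (u x - u y) ^+ 2 * jker r i n x y * mu R i n * mu R i n =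
   \sum_(x <- V_minus R i n) \sum_(y <- V_plus R i n)
   (u x - u y) ^+ 2 * jker r i n x y * mu R i n * mu R i n.
  rewrite exchange_big; apply: eq_bigr => x _; apply: eq_bigr => y _.
  by rewrite jker_sym -[u y - u x]opprB sqrrN.
rewrite Z1 Z2 Sy add0r addr0 /V_minus /V_plus big_map.
under eq_bigr => a _ do rewrite big_map.
rewrite -mulr2n; ring.
Qed.

Lemma ev_gt k : \forall i \near \oo, (k < i)%N.
Proof. by exists k.+1 => // i /=. Qed.

Lemma stepB (R : realType) (n : nat) (s : R)
  (r : nat -> 'I_4 -> R) (lam Lam : nat -> R) (u : R -> R) (i0 : nat) :
  0 < s < 1 ->
  (forall i, (2 < i)%N -> 0 < lam i <= Lam i) ->
  (forall (i m : nat) (sg : m.-tuple 'I_4), (2 < i)%N ->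
     lam i * `|phi_path i sg 0 - phi_path i sg 1| `^ (-1 - 2 * s)
       <= jker r i m (phi_path i sg 0) (phi_path i sg 1)
     /\ jker r i m (phi_path i sg 0) (phi_path i sg 1)
       <= Lam i * `|phi_path i sg 0 - phi_path i sg 1| `^ (-1 - 2 * s)) ->
  (fun i : nat => lam i / (i%:R) ^+ 2) @ \oo --> (1 : R) ->
  (fun i : nat => Lam i / (i%:R) ^+ 2) @ \oo --> (1 : R) ->
  (2 < i0)%N ->
  {within @Vbar_star R i0, continuous u} ->
  forall a b, (a < 2 ^ n)%N -> (b < 2 ^ n)%N ->
  (fun i => (u (a%:R / (i * 2 ^ n)%N%:R) - u (1 - b%:R / (i * 2 ^ n)%N%:R)) ^+ 2 *
      jker r i n (a%:R / (i * 2 ^ n)%N%:R) (1 - b%:R / (i * 2 ^ n)%N%:R) * mu R i n * mu R i n)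
  @ \oo --> (u 0 - u 1) ^+ 2 * ((2 ^ n)%N%:R^-1) ^+ 2.
Proof.
move=> hs hlL hJ hlam hLam hi0 hcont a b ha hb.
have [sg [hA hB]] := exists_path _ _ _ ha hb.
move: hs => /andP[s0 s1].
pose d i : R := 1 - (a + b)%N%:R / (i * 2 ^ n)%N%:R.
pose U i := (u (a%:R / (i * 2 ^ n)%N%:R) - u (1 - b%:R / (i * 2 ^ n)%N%:R)) ^+ 2.
pose L i := U i * lam i * mu R i n * mu R i n.
pose H i := U i * (Lam i * (d i * (d i * d i))^-1) * mu R i n * mu R i n.
have hc := (subspace_continuousP (Vbar_star i0) u).1 hcont.
have i0pos : (0 < i0)%N by lia.
have V0 : Vbar_star i0 (0:R).
  by left => /=; rewrite lexx invr_ge0 ler0n.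
have V1 : Vbar_star i0 (1:R).
  right => /=; rewrite lexx andbT lerBlDr lerDl invr_ge0 ler0n //.
have hux : (fun i => u (a%:R / (i * 2 ^ n)%N%:R)) @ \oo --> u 0.
  have hw := @cvg_within_seq R (Vbar_star i0) _ _ (frac_cvg0 R n a).
  have hh := hc 0 V0.
  apply: (cvg_comp _ _ (hw _) hh).
  near=> i; left => /=; rewrite frac_ge0 /= le_frac //; last by lia.
  by near: i; exists i0 => // j /=.
have hy : (fun i => 1 - b%:R / (i * 2 ^ n)%N%:R) @ \oo --> (1:R).
  rewrite -[X in _ --> X]subr0; apply: cvgB; [exact: cvg_cst | exact: frac_cvg0].
have huy : (fun i => u (1 - b%:R / (i * 2 ^ n)%N%:R)) @ \oo --> u 1.
  have hw := @cvg_within_seq R (Vbar_star i0) _ _ hy.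
  have hh := hc 1 V1.
  apply: (cvg_comp _ _ (hw _) hh).
  near=> i; right => /=.
  have h1 : b%:R / (i * 2 ^ n)%N%:R <= (i0%:R : R)^-1.
    rewrite le_frac //; last by lia.
    by near: i; exists i0 => // j /=.
  have h2 := frac_ge0 R i n b.
  apply/andP; split; lra.
have hU : U @ \oo --> (u 0 - u 1) ^+ 2.
  have -> : U = (fun i => (u (a%:R / (i * 2 ^ n)%N%:R) - u (1 - b%:R / (i * 2 ^ n)%N%:R)) *
                          (u (a%:R / (i * 2 ^ n)%N%:R) - u (1 - b%:R / (i * 2 ^ n)%N%:R))).
    by apply: funext => i; rewrite /U expr2.
  by rewrite expr2; apply: cvgM; apply: cvgB.
have hd : d @ \oo --> (1:R).
  rewrite -[X in _ --> X]subr0; apply: cvgB; [exact: cvg_cst | exact: frac_cvg0].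
have hd3 : (fun i => (d i * (d i * d i))^-1) @ \oo --> (1:R).
  have h3 : (fun i => d i * (d i * d i)) @ \oo --> (1 * (1 * 1) : R).
    by apply: cvgM => //; apply: cvgM.
  rewrite !mulr1 in h3.
  rewrite -[X in _ --> X]invr1; apply: cvgV => //.
have hcc : (fun=> ((2 ^ n)%N%:R^-1 : R) ^+ 2) @ \oo --> ((2 ^ n)%N%:R^-1 : R) ^+ 2 by apply: cvg_cst.
apply: (squeeze_cvgr (f := L) (h := H)).
- near=> i.
  have hi : (2 < i)%N by near: i; exact: ev_gt.
  have hi2 : (2 <= i)%N by lia.
  have hN : (0:R) < (i * 2 ^ n)%N%:R by rewrite ltr0n muln_gt0 expn_gt0 /=; lia.
  have hx0 : phi_path i sg (0:R) = a%:R / (i * 2 ^ n)%N%:R by rewrite (phi0 R sg i hi2) size_tuple hA.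
  have hy1 : phi_path i sg (1:R) = 1 - b%:R / (i * 2 ^ n)%N%:R by rewrite (phi1 R sg i hi2) size_tuple hB.
  have [Jl Ju] := hJ i n sg hi.
  rewrite hx0 hy1 in Jl Ju.
  have hab : (a + b)%N%:R / (i * 2 ^ n)%N%:R < (1:R).
    rewrite ltr_pdivrMr // mul1r ltr_nat. set p := (2^n)%N in ha hb *; nia.
  have hab0 := frac_ge0 R i n (a + b).
  have hd' : `|a%:R / (i * 2 ^ n)%N%:R - (1 - b%:R / (i * 2 ^ n)%N%:R)| = d i.
    have e : a%:R / (i * 2 ^ n)%N%:R - (1 - b%:R / (i * 2 ^ n)%N%:R) = - d i.
      by rewrite /d natrD mulrDl; ring.
    by rewrite e normrN ger0_norm // /d; lra.
  rewrite hd' in Jl Ju.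
  have dd : 0 < d i <= 1 by rewrite /d; apply/andP; split; lra.
  have pow1 : 1 <= d i `^ (-1 - 2 * s).
    have h : d i `^ 0 <= d i `^ (-1 - 2 * s) by apply: ger_powR dd _ _ _; lra.
    by rewrite powRr0 in h.
  have pow3 : d i `^ (-1 - 2 * s) <= (d i * (d i * d i))^-1.
    have e3 : (d i * (d i * d i))^-1 = d i `^ (- 3%:R).
      by rewrite powR_invn; [rewrite !exprS expr0 mulr1 | case/andP: dd => /ltW].
    by rewrite e3; apply: ger_powR dd _ _ _; lra.
  have U0 : 0 <= U i by rewrite /U sqr_ge0.
  have mu0 : 0 < mu R i n by rewrite /mu invr_gt0.
  have /andP[lam0 lamL] := hlL i hi.
  apply/andP; split.
  - rewrite /L !ler_pM2r //; apply: (ler_wpM2l U0).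
    exact: le_trans (ler_peMr (ltW lam0) pow1) Jl.
  - rewrite /H !ler_pM2r //; apply: (ler_wpM2l U0).
    apply: le_trans Ju _; apply: ler_wpM2l _ pow3.
    exact: le_trans (ltW lam0) lamL.
- have -> : L = (fun i => U i * (lam i / i%:R ^+ 2) * ((2 ^ n)%N%:R^-1) ^+ 2).
    by apply: funext => i; rewrite /L /mu natrM invfM -exprVn; ring.
  have := @cvgM R nat \oo _ _ _ _ _ (@cvgM R nat \oo _ _ _ _ _ hU hlam) hcc.
  rewrite !mulr1 => h; apply: h; typeclasses eauto.
- have -> : H = (fun i => U i * (Lam i / i%:R ^+ 2) * (d i * (d i * d i))^-1 * ((2 ^ n)%N%:R^-1) ^+ 2).
    by apply: funext => i; rewrite /H /mu natrM (invfM (i%:R : R)) -(exprVn (i%:R : R)); ring.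
  have := @cvgM R nat \oo _ _ _ _ _ (@cvgM R nat \oo _ _ _ _ _ (@cvgM R nat \oo _ _ _ _ _ hU hLam) hd3) hcc.
  rewrite !mulr1 => h; apply: h; typeclasses eauto.
Unshelve. all: by end_near.
Qed.

Lemma aux_field (R : realType) (x X : R) : X != 0 -> x * (X^-1) ^+ 2 * X * X = x.
Proof. by move=> hX; field. Qed.

Lemma aux_natr (R : realType) (x : R) m : x * m%:R * m%:R = x *+ m *+ m.
Proof. by rewrite !mulr_natr. Qed.

Theorem lemma6p3 (R : realType) (n : nat) (s : R)
  (r : nat -> 'I_4 -> R) (lam Lam : nat -> R) (u : R -> R) (i0 : nat) :
  0 < s < 1 ->
  (forall i k, 0 < r i k) ->
  (forall i, r i e_2im1 = r i e'_2im1) ->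
  (forall i, (2 < i)%N -> 0 < lam i <= Lam i) ->
  (forall (i m : nat) (sg : m.-tuple 'I_4), (2 < i)%N ->
     lam i * `|phi_path i sg 0 - phi_path i sg 1| `^ (-1 - 2 * s)
       <= jker r i m (phi_path i sg 0) (phi_path i sg 1)
     /\ jker r i m (phi_path i sg 0) (phi_path i sg 1)
       <= Lam i * `|phi_path i sg 0 - phi_path i sg 1| `^ (-1 - 2 * s)) ->
  (fun i : nat => lam i / (i%:R) ^+ 2) @ \oo --> (1 : R) ->
  (fun i : nat => Lam i / (i%:R) ^+ 2) @ \oo --> (1 : R) ->
  (2 < i0)%N ->
  {within @Vbar_star R i0, continuous u} ->
  (fun i : nat => energy r i n u) @ \oo --> 2 * `|u 0 - u 1| ^+ 2.
Proof.
move=> hs hr hr12 hlL hJ hlam hLam hi0 hcont.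
have hB := @stepB R n s r lam Lam u i0 hs hlL hJ hlam hLam hi0 hcont.
pose c := (u 0 - u 1) ^+ 2 * (((2 ^ n)%N%:R : R)^-1) ^+ 2.
have EC : (fun i => \sum_(a <- iota 0 (2 ^ n)) \sum_(b <- iota 0 (2 ^ n))
     ((u (a%:R / (i * 2 ^ n)%N%:R) - u (1 - b%:R / (i * 2 ^ n)%N%:R)) ^+ 2 *
      jker r i n (a%:R / (i * 2 ^ n)%N%:R) (1 - b%:R / (i * 2 ^ n)%N%:R) * mu R i n * mu R i n))
   @ \oo --> \sum_(a <- iota 0 (2 ^ n)) \sum_(b <- iota 0 (2 ^ n)) c.
  apply: cvg_sum_seq => a; rewrite mem_iota add0n => /andP[_ ha].
  apply: cvg_sum_seq => b; rewrite mem_iota add0n => /andP[_ hb].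
  by have := hB a b ha hb; rewrite /c.
have hc2 : (fun=> (2:R)) @ \oo --> (2:R) by apply: cvg_cst.
have H2 := @cvgM R nat \oo _ _ _ _ _ hc2 EC.
have -> : 2 * `|u 0 - u 1| ^+ 2 = 2 * (\sum_(a <- iota 0 (2 ^ n)) \sum_(b <- iota 0 (2 ^ n)) c).
  rewrite !big_const_seq !count_predT !size_iota !iter_addr_0 /c real_normK ?num_real //.
  have hX : ((2 ^ n)%N%:R : R) != 0 by rewrite pnatr_eq0 expn_eq0.
  by rewrite -aux_natr (aux_field _ _ _ hX).
apply: cvg_trans _ (H2 _).
apply: near_eq_cvg; near=> i.
have hi : (2 < i)%N by near: i; exact: ev_gt.
by rewrite /= stepA.
Unshelve. all: by end_near.
Qed.
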